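(* Let $A[0\ldots n-1]$, $B[0\ldots m-1]$ be sequences over a totally ordered alphabet. The sparse-DAG algorithm described in the context returns $\operatorname{LCBS}(A,B)$, the length of a longest common bitonic subsequence of $A$ and $B$.
   Context: A common subsequence of $A$ and $B$ is given by index pairs $(i_1,j_1),\dots,(i_\ell,j_\ell)$ with $i_1<\dots<i_\ell$, $j_1<\dots<j_\ell$ and $A[i_k]=B[j_k]$; it is bitonic if there is $h\in\{1,\dots,\ell\}$ with $A[i_1]<\dots<A[i_h]$ and $A[i_h]>\dots>A[i_\ell]$. $\operatorname{LCBS}(A,B)$ is the maximum length of a bitonic common subsequence ($0$ if there is none). Sparse-DAG algorithm: let $V=\{(i,j)\mid A[i]=B[j]\}$, sorted lexicographically by $(i$ ascending, $j$ ascending$)$. For $v=(i,j)\in V$ let $r_J(v)$ be $1$ plus the rank of $j$ among the distinct column indices in $V$, $r_V(v)$ the rank (from $1$) of $A[i]$ among the sorted distinct values of $A\cup B$, and $MAX_J=\max_v r_J(v)$. A 2-D range structure stores points with keys $(x,y)$ and values, supports $\textsc{Query}(a,b)$ = maximum value of stored points with $x\le a$, $y\le b$ ($0$ if none), and $\textsc{Update}((x,y),val)$. Forward pass (empty structure): for $v$ in sorted order, $INC[v]\gets\textsc{Query}(r_J(v)-1,r_V(v)-1)+1$, then $\textsc{Update}((r_J(v),r_V(v)),INC[v])$. Backward pass (new empty structure): for $v$ in reverse sorted order, with $\widehat r_J(v)=MAX_J-r_J(v)+1$, $DEC[v]\gets\textsc{Query}(\widehat r_J(v)-1,r_V(v)-1)+1$,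 then $\textsc{Update}((\widehat r_J(v),r_V(v)),DEC[v])$. Output $bestLen=\max\bigl(0,\max_{v\in V}(INC[v]+DEC[v]-1)\bigr)$. *)

(* Defs.v *)
From mathcomp Require Import all_boot all_order.
Set Implicit Arguments. Unset Strict Implicit. Unset Printing Implicit Defensive.
Import Order.TTheory.

Section LCBS.
Variables (d : Order.disp_t) (T : orderType d) (n m : nat).
Variables (A : 'I_n -> T) (B : 'I_m -> T).

Local Open Scope order_scope.

Definition common_subseq (s : seq ('I_n * 'I_m)) : Prop :=
  [/\ sorted ltn [seq nat_of_ord p.1 | p <- s],
      sorted ltn [seq nat_of_ord p.2 | p <- s] &
      all (fun p => A p.1 == B p.2) s].

(** Bitonic: some h in {1..l} with A[i_1] < ... < A[i_h] > ... > A[i_l]. *)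
Definition bitonic (s : seq ('I_n * 'I_m)) : Prop :=
  let vals := [seq A p.1 | p <- s] in
  exists h : nat, [/\ (0 < h)%N, (h <= size s)%N,
    sorted (fun x y => x < y) (take h vals) &
    sorted (fun x y => y < x) (drop h.-1 vals)].

Definition bitonic_common_subseq s := common_subseq s /\ bitonic s.

Definition is_LCBS (L : nat) : Prop :=
  ((L = 0%N /\ forall s, ~ bitonic_common_subseq s) \/
   exists s, bitonic_common_subseq s /\ size s = L) /\
  forall s, bitonic_common_subseq s -> (size s <= L)%N.

Definition V : seq ('I_n * 'I_m) :=
  [seq p <- [seq (i, j) | i <- enum 'I_n, j <- enum 'I_m] | A p.1 == B p.2].

Definition distinct_cols : seq nat :=
  sort leq (undup [seq nat_of_ord v.2 | v <- V]).

Definition rJ (v : 'I_n * 'I_m) : nat := (index (nat_of_ord v.2) distinct_cols).+2.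

Definition distinct_vals : seq T :=
  sort (fun x y => x <= y)
       (undup ([seq A i | i <- enum 'I_n] ++ [seq B j | j <- enum 'I_m])).

Definition rV (v : 'I_n * 'I_m) : nat := (index (A v.1) distinct_vals).+1.

Definition MAX_J : nat := (\max_(v <- V) rJ v)%N.

Definition rJhat (v : 'I_n * 'I_m) : nat := (MAX_J - rJ v + 1)%N.

End LCBS.

(** 2-D range structure: a list of stored points ((x,y), value). *)
Definition range_struct := seq ((nat * nat) * nat).

Definition rs_query (S : range_struct) (a b : nat) : nat :=
  \max_(p <- S | (p.1.1 <= a) && (p.1.2 <= b)) p.2.

Definition rs_update (S : range_struct) (k : nat * nat) (val : nat) : range_struct :=
  (k, val) :: S.

Fixpoint dag_pass (S : range_struct) (ks : seq (nat * nat)) : seq nat :=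
  match ks with
  | [::] => [::]
  | k :: ks' =>
      let val := (rs_query S (k.1 - 1) (k.2 - 1)).+1 in
      val :: dag_pass (rs_update S k val) ks'
  end.

Section Alg.
Variables (d : Order.disp_t) (T : orderType d) (n m : nat).
Variables (A : 'I_n -> T) (B : 'I_m -> T).

Definition INC : seq nat :=
  dag_pass [::] [seq (rJ A B v, rV A B v) | v <- V A B].

Definition DEC : seq nat :=
  rev (dag_pass [::] (rev [seq (rJhat A B v, rV A B v) | v <- V A B])).

Definition bestLen : nat :=
  maxn 0 (\max_(p <- zip INC DEC) (p.1 + p.2 - 1)).
End Alg.

(* Main.v *)
Require Import Defs.
From mathcomp Require Import all_boot all_order.
From mathcomp Require Import zify.
Set Implicit Arguments. Unset Strict Implicit. Unset Printing Implicit Defensive.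

Definition Pk (k' k : nat * nat) : bool := (k'.1 <= k.1 - 1) && (k'.2 <= k.2 - 1).

Lemma dag_pass_size S ks : size (dag_pass S ks) = size ks.
Proof. by elim: ks S => [|k ks IH] S //=; rewrite IH. Qed.

Lemma dag_pass_nth S ks t : t < size ks ->
  nth 0 (dag_pass S ks) t =
  (maxn (rs_query S ((nth (0,0) ks t).1 - 1) ((nth (0,0) ks t).2 - 1))
     (\max_(i < t) (if Pk (nth (0,0) ks i) (nth (0,0) ks t)
                    then nth 0 (dag_pass S ks) i else 0))).+1.
Proof.
elim: ks S t => [|k ks IH] S [|t] //=.
  by move=> _; rewrite big_ord0 maxn0.
rewrite ltnS => ht; rewrite IH // big_ord_recl /=.
rewrite /rs_update {1}/rs_query big_cons /= -/(rs_query S _ _).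
rewrite /Pk /=.
case: ifP => _; last by rewrite max0n.
set a := (rs_query S (k.1 - 1) _).+1; set b := rs_query S _ _; set M := bigop _ _ _; lia.
Qed.

Lemma dag_pass_nil ks t : t < size ks ->
  nth 0 (dag_pass [::] ks) t =
  (\max_(i < t) (if Pk (nth (0,0) ks i) (nth (0,0) ks t)
                    then nth 0 (dag_pass [::] ks) i else 0)).+1.
Proof. by move=> ht; rewrite dag_pass_nth // /rs_query big_nil max0n. Qed.

Lemma sorted_rcons2 (X : Type) (r : rel X) s x y :
  sorted r (rcons (rcons s x) y) = sorted r (rcons s x) && r x y.
Proof.
case: s => [|a s] /=; first by rewrite andbT.
by rewrite rcons_path last_rcons.
Qed.

Section Chain.
Variables (N : nat) (ks : seq (nat * nat)) (L : nat -> nat).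
Hypothesis HL : forall t, t < N ->
  L t = (\max_(i < t) (if Pk (nth (0,0) ks i) (nth (0,0) ks t) then L i else 0)).+1.
Definition Qc (i t : nat) : bool := [&& i < t, t < N & Pk (nth (0,0) ks i) (nth (0,0) ks t)].

Lemma chain_bound c t : t < N -> sorted Qc (rcons c t) -> (size c).+1 <= L t.
Proof.
elim/last_ind: c t => [|c x IH] t ht.
  by move=> _; rewrite HL.
rewrite sorted_rcons2 => /andP [hs hq].
move/and3P: (hq) => [hxt _ hp].
have hx : x < N by apply: ltn_trans ht.
have := IH x hx hs.
rewrite size_rcons HL // => h1.
rewrite (HL ht) ltnS.
apply: leq_trans h1 _.
have := @leq_bigmax _ (fun i : 'I_t => if Pk (nth (0,0) ks i) (nth (0,0) ks t) then L i else 0) (Ordinal hxt).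
by rewrite /= hp HL.
Qed.

Lemma chain_exists t : t < N -> exists c, sorted Qc (rcons c t) /\ (size c).+1 = L t.
Proof.
elim: t {-2}t (leqnn t) => [|t0 IH] t.
  rewrite leqn0 => /eqP -> h0; exists [::]; split => //.
  by rewrite HL // big_ord0.
move=> ht hN.
have [t0' | tpos] := posnP t.
  subst t; exists [::]; split => //; by rewrite HL // big_ord0.
have hcard : 0 < #|'I_t| by rewrite card_ord.
have [i0 hi0] := @eq_bigmax _ (fun i : 'I_t => if Pk (nth (0,0) ks i) (nth (0,0) ks t) then L i else 0) hcard.
move: hi0; case: ifP => hp hmax.
  have hi0N : i0 < N by apply: ltn_trans (ltn_ord i0) hN.
  have [c [hc1 hc2]] := IH i0 (leq_trans (ltn_ord i0) ht : i0 <= t0) hi0N.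
  exists (rcons c i0); split.
    rewrite sorted_rcons2 hc1 /Qc ltn_ord hN hp //.
  by rewrite size_rcons (HL hN) hmax hc2.
exists [::]; split => //. by rewrite (HL hN) hmax.
Qed.
End Chain.
Import Order.TTheory.

Lemma index_lt (X : eqType) (r : rel X) s x y : transitive r -> irreflexive r ->
  sorted r s -> x \in s -> y \in s -> r x y = (index x s < index y s).
Proof.
move=> tr irr hs hx hy.
have hn := sorted_ltn_nth tr x hs.
have ix : index x s \in [pred k | k < size s] by rewrite inE index_mem.
have iy : index y s \in [pred k | k < size s] by rewrite inE index_mem.
apply/idP/idP => h.
  case: (ltngtP (index x s) (index y s)) => // h2.
    have := hn _ _ iy ix h2; rewrite !nth_index // => hyx.
    by have := tr _ _ _ h hyx; rewrite irr.
  have exy : x = y by rewrite -(nth_index x hx) h2 nth_index.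
  by move: h; rewrite exy irr.
by have := hn _ _ ix iy h; rewrite !nth_index.
Qed.

Section Spec.
Variables (d : Order.disp_t) (T : orderType d) (n m : nat).
Variables (A : 'I_n -> T) (B : 'I_m -> T).
Local Open Scope order_scope.

Definition lexlt (u v : 'I_n * 'I_m) : bool :=
  (u.1 < v.1)%N || ((nat_of_ord u.1 == nat_of_ord v.1) && (u.2 < v.2)%N).

Lemma lexlt_trans : transitive lexlt.
Proof.
move=> v u w; rewrite /lexlt.
case/orP=> [h1|/andP [/eqP h1 h2]]; case/orP=> [h3|/andP [/eqP h3 h4]].
- by rewrite (ltn_trans h1 h3).
- by rewrite -h3 h1.
- by rewrite h1 h3.
- by rewrite h1 h3 eqxx (ltn_trans h2 h4) orbT.
Qed.

Lemma lexlt_irr : irreflexive lexlt.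
Proof. by move=> u; rewrite /lexlt !ltnn andbF. Qed.

Lemma ord_pairwise k : pairwise (relpre val ltn) (enum 'I_k).
Proof.
by rewrite -pairwise_map val_enum_ord -sorted_pairwise ?iota_ltn_sorted //; apply: ltn_trans.
Qed.

Lemma allpairs_pairwise (s : seq 'I_n) (t : seq 'I_m) :
  pairwise (relpre val ltn) s -> pairwise (relpre val ltn) t ->
  pairwise lexlt [seq (x, y) | x <- s, y <- t].
Proof.
move=> + ht; elim: s => [|x s IH] //= /andP [hx hs].
rewrite pairwise_cat IH // andbT pairwise_map.
apply/andP; split.
  apply/allrelP => a b ha hb. case/seq.mapP: ha => y _ ->. case/allpairsP: hb => [[x1 y1] [hx1 _ ->]].
  by move/allP: hx => /(_ _ hx1) /= h; rewrite /lexlt /= h.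
by apply: sub_pairwise ht => a b /= h; rewrite /lexlt /= eqxx h orbT.
Qed.

Lemma V_sorted : sorted lexlt (V A B).
Proof.
apply: sorted_filter; first exact: lexlt_trans.
by rewrite sorted_pairwise ?allpairs_pairwise ?ord_pairwise //; apply: lexlt_trans.
Qed.

Lemma memV u : (u \in V A B) = (A u.1 == B u.2).
Proof.
rewrite mem_filter andb_idr // => _.
by apply/allpairsP; exists u; rewrite !mem_enum; case: u.
Qed.

Lemma dc_sorted : sorted ltn (distinct_cols A B).
Proof.
rewrite ltn_sorted_uniq_leq sort_uniq undup_uniq /=.
by apply: sort_sorted; apply: leq_total.
Qed.

Lemma mem_dc u : u \in V A B -> (val u.2 \in distinct_cols A B).
Proof. by move=> hu; rewrite mem_sort mem_undup; apply: map_f. Qed.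

Lemma rJ_lt u v : u \in V A B -> v \in V A B -> (rJ A B u < rJ A B v)%N = (u.2 < v.2)%N.
Proof.
move=> hu hv; rewrite /rJ !ltnS.
by rewrite (index_lt ltn_trans ltnn dc_sorted (mem_dc hu) (mem_dc hv)).
Qed.

Lemma dv_sorted : sorted <%O (distinct_vals A B).
Proof. by rewrite /distinct_vals sort_lt_sorted undup_uniq. Qed.

Lemma mem_dv (u : 'I_n * 'I_m) : A u.1 \in distinct_vals A B.
Proof. by rewrite mem_sort mem_undup mem_cat map_f ?mem_enum. Qed.

Lemma rV_lt (u v : 'I_n * 'I_m) : (rV A B u < rV A B v)%N = (A u.1 < A v.1).
Proof.
rewrite /rV ltnS (index_lt _ _ dv_sorted (mem_dv u) (mem_dv v)) //.
by move=> ???; apply: lt_trans.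
Qed.

Lemma rJ_MAX u : u \in V A B -> (rJ A B u <= MAX_J A B)%N.
Proof. move=> hu; rewrite /MAX_J. exact: leq_bigmax_seq. Qed.

End Spec.

Lemma sorted_rcons_all (X : Type) (r : rel X) (P : pred X) c t :
  (forall a b, r a b -> P a) -> P t -> sorted r (rcons c t) -> all P (rcons c t).
Proof.
move=> hr; elim/last_ind: c t => [|c x IH] t ht /=; first by rewrite ht.
rewrite sorted_rcons2 => /andP [hs hq].
by rewrite all_rcons ht (IH x (hr _ _ hq) hs).
Qed.

Lemma sorted_and3 (X : Type) (r1 r2 r3 : rel X) s :
  sorted r1 s -> sorted r2 s -> sorted r3 s ->
  sorted (fun x y => [&& r1 x y, r2 x y & r3 x y]) s.
Proof.
case: s => // x s /=; elim: s x => // y s IH x /=.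
case/andP=> h1 p1 /andP [h2 p2] /andP [h3 p3].
by rewrite h1 h2 h3 IH.
Qed.

Lemma sorted_cat_mid (X : Type) (r : rel X) cs v ds :
  sorted r (rcons cs v) -> sorted r (v :: ds) -> sorted r (cs ++ v :: ds).
Proof.
case: cs => [|c cs] //= h1 h2.
by rewrite cat_path; move: h1; rewrite rcons_path => /andP [-> h3] /=; rewrite h3.
Qed.

Lemma bigmax_attained (X : eqType) (F : X -> nat) (r : seq X) :
  r != [::] -> exists2 x, x \in r & \max_(i <- r) F i = F x.
Proof.
elim: r => // x r IH _; rewrite big_cons.
case: r IH => [|y r] IH.
  by exists x; rewrite ?mem_head // big_nil maxn0.
have [z hz ->] := IH isT.
case: (leqP (F x) (F z)) => h.
  by exists z; [rewrite in_cons hz orbT | lia].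
by exists x; [rewrite mem_head | lia].
Qed.

Section Main.
Variables (d : Order.disp_t) (T : orderType d) (n m : nat).
Variables (A : 'I_n -> T) (B : 'I_m -> T).
Local Open Scope order_scope.

Local Notation Vs := (V A B).
Local Notation N := (size (V A B)).
Definition ksf := [seq (rJ A B v, rV A B v) | v <- V A B].
Definition ksb := rev [seq (rJhat A B v, rV A B v) | v <- V A B].

Definition inc (u v : 'I_n * 'I_m) : bool :=
  [&& (u.1 < v.1)%N, (u.2 < v.2)%N & A u.1 < A v.1].
Definition dec (u v : 'I_n * 'I_m) : bool :=
  [&& (u.1 < v.1)%N, (u.2 < v.2)%N & A v.1 < A u.1].

Lemma lex_fst u v : u \in Vs -> v \in Vs -> lexlt u v -> A u.1 != A v.1 -> (u.1 < v.1)%N.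
Proof.
move=> hu hv; rewrite /lexlt => /orP [//|/andP [/eqP e _]].
have -> : u.1 = v.1 by apply: ord_inj.
by rewrite eqxx.
Qed.

Lemma nth_ksf x0 t : (t < N)%N -> nth (0,0) ksf t = (rJ A B (nth x0 Vs t), rV A B (nth x0 Vs t)).
Proof. by move=> ht; rewrite /ksf (nth_map x0). Qed.

Lemma nth_ksb x0 t : (t < N)%N ->
  nth (0,0) ksb t = (rJhat A B (nth x0 Vs (N - t.+1)), rV A B (nth x0 Vs (N - t.+1))).
Proof.
move=> ht; rewrite /ksb nth_rev size_map // (nth_map x0) //.
lia.
Qed.

Lemma Qf_inc x0 t' t : Qc N ksf t' t -> inc (nth x0 Vs t') (nth x0 Vs t).
Proof.
case/and3P => h1 h2 hp.
have h1N : (t' < N)%N by apply: ltn_trans h2.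
have hu := mem_nth x0 h1N; have hv := mem_nth x0 h2.
move: hp; rewrite (nth_ksf x0 h1N) (nth_ksf x0 h2) /Pk /=.
set u := nth x0 Vs t'; set v := nth x0 Vs t.
have gJ : (1 < rJ A B v)%N by [].
have gV : (0 < rV A B v)%N by [].
move=> /andP [hJ hV].
have hJ' : (rJ A B u < rJ A B v)%N by lia.
have hV' : (rV A B u < rV A B v)%N by lia.
rewrite rJ_lt // in hJ'; rewrite rV_lt in hV'.
have hl : lexlt u v by apply: (sorted_ltn_nth (@lexlt_trans _ _) x0 (V_sorted A B)).
rewrite /inc hJ' hV' (lex_fst hu hv hl) //.
by apply: contraTneq hV' => ->; rewrite ltxx.
Qed.

Lemma inc_Qf u v : u \in Vs -> v \in Vs -> inc u v -> Qc N ksf (index u Vs) (index v Vs).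
Proof.
move=> hu hv /and3P [h1 h2 h3].
have hl : lexlt u v by rewrite /lexlt h1.
rewrite /Qc -(index_lt (@lexlt_trans _ _) (@lexlt_irr _ _) (V_sorted A B) hu hv) hl index_mem hv /=.
rewrite (nth_ksf u) ?index_mem // (nth_ksf u) ?index_mem // !nth_index // /Pk /=.
have := rJ_lt hu hv; rewrite h2 => hJ.
have := rV_lt A B u v; rewrite h3 => hV.
lia.
Qed.

Lemma Qb_dec x0 t' t : Qc N ksb t' t -> dec (nth x0 Vs (N - t.+1)) (nth x0 Vs (N - t'.+1)).
Proof.
case/and3P => h1 h2 hp.
have h1N : (t' < N)%N by apply: ltn_trans h2.
have hiu : (N - t'.+1 < N)%N by lia.
have hiw : (N - t.+1 < N)%N by lia.
have hu := mem_nth x0 hiu; have hw := mem_nth x0 hiw.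
move: hp; rewrite (nth_ksb x0 h1N) (nth_ksb x0 h2) /Pk /rJhat /=.
set u := nth x0 Vs (N - t'.+1); set w := nth x0 Vs (N - t.+1).
have gV : (0 < rV A B w)%N by [].
have mu := rJ_MAX hu; have mw := rJ_MAX hw.
move=> /andP [hJ hV].
have hJ' : (rJ A B w < rJ A B u)%N by lia.
have hV' : (rV A B u < rV A B w)%N by lia.
rewrite rJ_lt // in hJ'; rewrite rV_lt in hV'.
have hl : lexlt w u.
  by apply: (sorted_ltn_nth (@lexlt_trans _ _) x0 (V_sorted A B)) => //; lia.
rewrite /dec hJ' hV' (lex_fst hw hu hl) //.
by apply: contraTneq hV' => ->; rewrite ltxx.
Qed.

Lemma dec_Qb u v : u \in Vs -> v \in Vs -> dec u v ->
  Qc N ksb (N - (index v Vs).+1) (N - (index u Vs).+1).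
Proof.
move=> hu hv /and3P [h1 h2 h3].
have hl : lexlt u v by rewrite /lexlt h1.
have hi := hl; rewrite (index_lt (@lexlt_trans _ _) (@lexlt_irr _ _) (V_sorted A B) hu hv) in hi.
have iu : (index u Vs < N)%N by rewrite index_mem.
have iv : (index v Vs < N)%N by rewrite index_mem.
rewrite /Qc.
have -> : (N - (index v Vs).+1 < N - (index u Vs).+1)%N by lia.
have -> : (N - (index u Vs).+1 < N)%N by lia.
rewrite (nth_ksb u) ?(nth_ksb u) /=; try lia.
have -> : N - (N - (index v Vs).+1).+1 = index v Vs by lia.
have -> : N - (N - (index u Vs).+1).+1 = index u Vs by lia.
rewrite !nth_index // /Pk /rJhat /=.
have := rJ_lt hu hv; rewrite h2 => hJ.
have := rV_lt A B v u; rewrite h3 => hV.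
have mu := rJ_MAX hu; have mv := rJ_MAX hv.
lia.
Qed.

End Main.

Section Main2.
Variables (d : Order.disp_t) (T : orderType d) (n m : nat).
Variables (A : 'I_n -> T) (B : 'I_m -> T).
Local Open Scope order_scope.

Local Notation Vs := (V A B).
Local Notation N := (size (V A B)).
Local Notation ksf := (ksf A B).
Local Notation ksb := (ksb A B).
Local Notation inc := (inc A).
Local Notation dec := (dec A).

Definition Lf t := nth 0 (INC A B) t.
Definition Lb t := nth 0 (dag_pass [::] ksb) t.

Lemma HLf t : (t < N)%N ->
  Lf t = (\max_(i < t) (if Pk (nth (0,0) ksf i) (nth (0,0) ksf t) then Lf i else 0)).+1.
Proof. by move=> ht; rewrite /Lf /INC dag_pass_nil // size_map. Qed.

Lemma HLb t : (t < N)%N ->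
  Lb t = (\max_(i < t) (if Pk (nth (0,0) ksb i) (nth (0,0) ksb t) then Lb i else 0)).+1.
Proof. by move=> ht; rewrite /Lb dag_pass_nil // /ksb size_rev size_map. Qed.

Lemma size_INC : size (INC A B) = N.
Proof. by rewrite /INC dag_pass_size size_map. Qed.

Lemma size_DEC : size (DEC A B) = N.
Proof. by rewrite /DEC size_rev dag_pass_size size_rev size_map. Qed.

Lemma DEC_Lb t : (t < N)%N -> nth 0 (DEC A B) t = Lb (N - t.+1).
Proof.
move=> ht; rewrite /DEC nth_rev; last by rewrite dag_pass_size size_rev size_map.
by rewrite dag_pass_size size_rev size_map.
Qed.

Lemma F1 x0 t : (t < N)%N -> exists cs,
  [/\ sorted inc (rcons cs (nth x0 Vs t)), all (mem Vs) cs & (size cs).+1 = Lf t].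
Proof.
move=> ht.
have [c [hc hs]] := chain_exists HLf ht.
have hall : all (fun k => k < N)%N (rcons c t).
  apply: (sorted_rcons_all (P := fun k => (k < N)%N) _ ht hc) => a b /and3P [h1 h2 _]; apply: ltn_trans h1 h2.
exists (map (nth x0 Vs) c); split.
- rewrite -map_rcons sorted_map; apply: sub_sorted hc => a b /= h.
  exact: Qf_inc.
- apply/allP => x /mapP [k hk ->]; apply: mem_nth.
  by move/allP: hall; apply; rewrite mem_rcons in_cons hk orbT.
- by rewrite size_map.
Qed.

Lemma F2 x0 t : (t < N)%N -> exists ds,
  [/\ sorted dec (nth x0 Vs t :: ds), all (mem Vs) ds & (size ds).+1 = nth 0 (DEC A B) t].
Proof.
move=> ht.
have htb : (N - t.+1 < N)%N by lia.
have [c [hc hs]] := chain_exists HLb htb.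
have hall : all (fun k => k < N)%N (rcons c (N - t.+1)).
  apply: (sorted_rcons_all (P := fun k => (k < N)%N) _ htb hc) => a b /and3P [h1 h2 _]; apply: ltn_trans h1 h2.
pose g k := nth x0 Vs (N - k.+1).
exists (rev (map g c)); split.
- have -> : nth x0 Vs t = g (N - t.+1) by rewrite /g; congr nth; lia.
  rewrite -rev_rcons -map_rcons rev_sorted sorted_map.
  apply: sub_sorted hc => a b /= h.
  exact: Qb_dec.
- apply/allP => x; rewrite mem_rev => /mapP [k hk ->]; apply: mem_nth.
  by rewrite ltn_subrL /=; apply: leq_ltn_trans ht.
- by rewrite size_rev size_map hs DEC_Lb.
Qed.

Lemma B1 cs p ds : sorted inc (rcons cs p) -> sorted dec (p :: ds) ->
  all (mem Vs) (rcons cs p) -> all (mem Vs) ds ->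
  (size cs < Lf (index p Vs))%N /\ (size ds < nth 0 (DEC A B) (index p Vs))%N.
Proof.
move=> hi hd ha hb.
have hp : p \in Vs by move/allP: ha; apply; rewrite mem_rcons mem_head.
have ip : (index p Vs < N)%N by rewrite index_mem.
split.
  have := @chain_bound N ksf Lf HLf (map (index^~ Vs) cs) (index p Vs) ip.
  rewrite size_map; apply.
  rewrite -map_rcons sorted_map.
  apply: (sub_in_sorted _ ha hi) => u v hu hv h.
  exact: inc_Qf.
have := @chain_bound N ksb Lb HLb (rev (map (fun u => N - (index u Vs).+1) ds)) (N - (index p Vs).+1).
rewrite size_rev size_map DEC_Lb //; apply; first by lia.
rewrite -rev_cons.
have -> : N - (index p Vs).+1 :: [seq N - (index u Vs).+1 | u <- ds]
   = [seq N - (index u Vs).+1 | u <- p :: ds] by [].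
rewrite rev_sorted sorted_map.
apply: (sub_in_sorted (P := mem Vs)) hd => [u v hu hv h|]; first exact: dec_Qb.
by rewrite /= hb andbT.
Qed.

Lemma decomp s : bitonic_common_subseq A B s -> exists cs p ds,
  [/\ s = cs ++ p :: ds, sorted inc (rcons cs p), sorted dec (p :: ds) & all (mem Vs) s].
Proof.
case=> [[h1 h2 h3] [h [hh hs ht hd]]].
case: h hh hs ht hd => // h' _ hs ht hd.
have [p0 _] : exists p0 : 'I_n * 'I_m, True by case: s {h1 h2 h3 ht hd} hs => [|p0 ?] //; exists p0.
exists (take h' s), (nth p0 s h'), (drop h'.+1 s); split.
- by rewrite -drop_nth // cat_take_drop.
- rewrite -take_nth //.
  rewrite -map_take sorted_map in ht.
  rewrite sorted_map in h1; rewrite sorted_map in h2.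
  apply: (sub_sorted _ (sorted_and3 (take_sorted h'.+1 h1) (take_sorted h'.+1 h2) ht)).
  by [].
- rewrite -drop_nth //.
  rewrite /= -map_drop sorted_map in hd.
  rewrite sorted_map in h1; rewrite sorted_map in h2.
  apply: (sub_sorted _ (sorted_and3 (drop_sorted h' h1) (drop_sorted h' h2) hd)).
  by [].
- by apply/allP => x hx; change (x \in Vs); rewrite memV; move/allP: h3; apply.
Qed.

End Main2.

Theorem mainTheorem7 (d : Order.disp_t) (T : orderType d) (n m : nat)
  (A : 'I_n -> T) (B : 'I_m -> T) :
  is_LCBS A B (bestLen A B).
Proof.
have ub : forall t, (t < size (V A B))%N ->
    (Lf A B t + nth 0 (DEC A B) t - 1 <= bestLen A B)%N.
  move=> t ht; rewrite /bestLen max0n.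
  have hz : (Lf A B t, nth 0 (DEC A B) t) \in zip (INC A B) (DEC A B).
    rewrite /Lf -nth_zip ?size_INC ?size_DEC //; apply: mem_nth.
    by rewrite size1_zip ?size_INC ?size_DEC.
  by apply: (leq_bigmax_seq (F := fun p : nat * nat => (p.1 + p.2 - 1)%N) _ hz).
have bound : forall s, bitonic_common_subseq A B s -> (size s <= bestLen A B)%N.
  move=> s /decomp [cs [p [ds [-> hi hd ha]]]].
  have hp : p \in V A B by move/allP: ha; apply; rewrite mem_cat mem_head orbT.
  have ha1 : all (mem (V A B)) (rcons cs p).
    by move: ha; rewrite all_cat all_rcons /= => /and3P [-> _ _]; rewrite hp.
  have ha2 : all (mem (V A B)) ds by move: ha; rewrite all_cat /= => /and3P [_ _ ->].
  have [b1 b2] := B1 hi hd ha1 ha2.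
  have := ub (index p (V A B)); rewrite index_mem hp => /(_ isT).
  rewrite size_cat /=; lia.
split => //.
case hV: (V A B) => [|x0 rest].
  left; split.
    by rewrite /bestLen /INC /DEC hV /= big_nil.
  move=> s /decomp [cs [p [ds [-> _ _ ha]]]].
  by move: ha; rewrite hV all_cat /= andbF.
right.
have hN : (0 < size (V A B))%N by rewrite hV.
have [t ht ->] : exists2 t, (t < size (V A B))%N & bestLen A B = (Lf A B t + nth 0 (DEC A B) t - 1)%N.
  rewrite /bestLen max0n.
  have hnz : zip (INC A B) (DEC A B) != [::].
    by rewrite -size_eq0 size1_zip ?size_INC ?size_DEC // -lt0n.
  have [x hx ->] := bigmax_attained (fun p : nat * nat => p.1 + p.2 - 1)%N hnz.
  case/(nthP (0,0)): hx => k hk <-.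
  rewrite size1_zip ?size_INC ?size_DEC // in hk.
  exists k => //; rewrite nth_zip ?size_INC ?size_DEC //.
have [cs [hc1 hc2 hc3]] := F1 x0 ht.
have [ds [hd1 hd2 hd3]] := F2 x0 ht.
set v := nth x0 (V A B) t in hc1 hd1.
have hv : v \in V A B by apply: mem_nth.
exists (cs ++ v :: ds); split; last by rewrite size_cat /= -hc3 -hd3; lia.
split; first split.
- rewrite sorted_map; apply: sorted_cat_mid.
    by apply: sub_sorted hc1 => x y /and3P [].
  by apply: sub_sorted hd1 => x y /and3P [].
- rewrite sorted_map; apply: sorted_cat_mid.
    by apply: sub_sorted hc1 => x y /and3P [].
  by apply: sub_sorted hd1 => x y /and3P [].
- apply/allP => x; rewrite mem_cat in_cons -memV => /or3P [h|/eqP ->|h] //.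
    by move/allP: hc2; apply.
  by move/allP: hd2; apply.
rewrite /bitonic /=. exists (size cs).+1. split.
- by [].
- by rewrite size_cat /= addnS ltnS leq_addr.
- rewrite -map_take -cat_rcons -(size_rcons cs v) take_size_cat // sorted_map.
  by apply: sub_sorted hc1 => x y /and3P [].
- rewrite /= -map_drop drop_size_cat // sorted_map.
  by apply: sub_sorted hd1 => x y /and3P [].
Qed.
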